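(* Let $n,r\in\mathbb N$ with $r<\frac n2$. Then $\tau(\mathfrak Q^{(n,r)})=\frac rn$, $$\tau(\mathfrak P^{(n)}_i\mathfrak Q^{(n,r)})=\frac{r\,(2r-1+(-1)^n)}{4n^2}\quad (i=3,4),\qquad \tau(\mathfrak P^{(n)}_i\mathfrak Q^{(n,r)})=\frac{r\,(4n-2r-1-(-1)^n)}{4n^2}\quad (i=1,2).$$
   Context: $\tau=\frac1n\operatorname{tr}$ is the normalized trace on $M_n(\mathbb C)$. For an invertible Hermitian matrix $X$, $\operatorname{sgn}(X)$ is the unique Hermitian unitary commuting with $X$ with $\operatorname{sgn}(X)X$ positive definite. For $n\in\mathbb N$, $\mathfrak P^{(n)}_1,\dots,\mathfrak P^{(n)}_4\in M_n(\mathbb R)$ denote orthogonal projections (real symmetric idempotent matrices) such that (i) $\mathfrak P^{(n)}_1+\dots+\mathfrak P^{(n)}_4=(2-\frac1n)I_n$; (ii) $\operatorname{rk}\mathfrak P^{(n)}_1=\lfloor\frac n2\rfloor-(-1)^n$ and $\operatorname{rk}\mathfrak P^{(n)}_i=\lfloor\frac n2\rfloor$ for $i=2,3,4$; (iii) the only subspaces of $\mathbb C^n$ invariant under all four matrices are $0$ and $\mathbb C^n$. Such quadruples exist for every $n$, and any two of them are simultaneously unitarily equivalent. For $0\le r\le n$, $\mathfrak Q^{(n,r)}:=\frac12\big(I+\operatorname{sgn}((2r-\frac12)I-n(\mathfrak P^{(n)}_3+\mathfrak P^{(n)}_4))\big)$ (the argument of $\operatorname{sgn}$ is invertible); equivalently,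 $\mathfrak Q^{(n,r)}$ is the orthogonal projection onto the span of eigenvectors of $\mathfrak P^{(n)}_3+\mathfrak P^{(n)}_4$ for its $r$ smallest eigenvalues. *)

(* Defs.v *)
From HB Require Import structures.
From mathcomp Require Import all_boot all_order all_algebra.
Set Implicit Arguments. Unset Strict Implicit. Unset Printing Implicit Defensive.
Import Order.TTheory GRing.Theory Num.Theory.
Local Open Scope ring_scope.

Definition cadj (C : numClosedFieldType) (m n : nat) (M : 'M[C]_(m, n)) : 'M[C]_(n, m) :=
  (map_mx Num.conj M)^T.

Definition hermitian (C : numClosedFieldType) (n : nat) (M : 'M[C]_n) : Prop :=
  cadj M = M.

Definition posdef (C : numClosedFieldType) (n : nat) (M : 'M[C]_n) : Prop :=
  hermitian M /\ forall v : 'cV[C]_n, v != 0 -> 0 < (cadj v *m M *m v) 0 0.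

Definition is_sgn (C : numClosedFieldType) (n : nat) (X U : 'M[C]_n) : Prop :=
  [/\ hermitian U, U *m cadj U = 1%:M, U *m X = X *m U & posdef (U *m X)].

Definition real_orth_proj (C : numClosedFieldType) (n : nat) (P : 'M[C]_n) : Prop :=
  [/\ forall i j, P i j \is Num.real, P^T = P & P *m P = P].

Definition ntr (C : numClosedFieldType) (n : nat) (M : 'M[C]_n) : C :=
  \tr M / n%:R.

(* Main.v *)
Require Import Defs.
From HB Require Import structures.
From mathcomp Require Import all_boot all_order all_algebra.
From mathcomp Require Import ring zify.
Import Order.TTheory GRing.Theory Num.Theory.
Set Implicit Arguments. Unset Strict Implicit. Unset Printing Implicit Defensive.
Local Open Scope ring_scope.

Lemma two_proj (C : comPzRingType) n (P Q : 'M[C]_n) : P *m P = P -> Q *m Q = Q ->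
  (P + Q - 1%:M) *m (P - Q) = - ((P - Q) *m (P + Q - 1%:M)) /\
  (P - Q) *m (P - Q) = 1%:M - (P + Q - 1%:M) *m (P + Q - 1%:M).
Proof.
move=> hP hQ; split;
  rewrite !(mulmxDl, mulmxDr, mulNmx, mulmxN) hP hQ !mul1mx !mulmx1;
  move: (P *m Q) (Q *m P) => x y;
  by apply/matrixP=> i j; rewrite !mxE; ring.
Qed.

Section Herm.
Variable C : numClosedFieldType.

Lemma cadjM m n p (A : 'M[C]_(m, n)) (B : 'M[C]_(n, p)) :
  cadj (A *m B) = cadj B *m cadj A.
Proof. by rewrite /cadj map_mxM trmx_mul. Qed.

Lemma cadjD m n (A B : 'M[C]_(m, n)) : cadj (A + B) = cadj A + cadj B.
Proof. by rewrite /cadj map_mxD linearD. Qed.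

Lemma cadjN m n (A : 'M[C]_(m, n)) : cadj (- A) = - cadj A.
Proof. by rewrite /cadj map_mxN linearN. Qed.

Lemma cadjZ m n a (A : 'M[C]_(m, n)) : cadj (a *: A) = a^* *: cadj A.
Proof. by rewrite /cadj map_mxZ linearZ. Qed.

Lemma cadj1 n : cadj (1%:M : 'M[C]_n) = 1%:M.
Proof. by apply/matrixP=> i j; rewrite !mxE rmorphMn rmorph1 eq_sym. Qed.

Lemma herm_proj n (P : 'M[C]_n) : real_orth_proj P -> Defs.hermitian P /\ P *m P = P.
Proof.
case=> hr ht hi; split=> //; rewrite /Defs.hermitian /cadj.
apply/matrixP=> i j; rewrite !mxE conj_Creal //.
by rewrite -[in RHS]ht mxE.
Qed.

Lemma nrm_gt0 n (v : 'rV[C]_n) : v != 0 -> 0 < (v *m cadj v) 0 0.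
Proof.
move=> vn0.
have E : (v *m cadj v) 0 0 = \sum_j v 0 j * (v 0 j)^*.
  by rewrite mxE; apply: eq_bigr => j _; rewrite !mxE.
rewrite E lt_def; apply/andP; split; last by apply: sumr_ge0 => j _; exact: mul_conjC_ge0.
apply: contra vn0 => /eqP e; apply/eqP/rowP => j.
have := @psumr_eq0P _ _ predT (fun j => v 0 j * (v 0 j)^*) (fun j _ => mul_conjC_ge0 (v 0 j)) e j isT.
by move/eqP; rewrite mul_conjC_eq0 mxE => /eqP.
Qed.

Lemma herm_sq m n (v : 'M[C]_(m, n)) (M : 'M[C]_n) : Defs.hermitian M ->
  (v *m M) *m cadj (v *m M) = v *m (M *m M) *m cadj v.
Proof. by move=> hM; rewrite cadjM hM !mulmxA. Qed.

Lemma eig_bound n (P Q : 'M[C]_n) (v : 'rV[C]_n) a :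
  Defs.hermitian P -> Defs.hermitian Q -> P *m P = P -> Q *m Q = Q ->
  v != 0 -> v *m (P + Q - 1%:M) = a *: v -> a \is Num.real /\ 0 <= 1 - a ^+ 2.
Proof.
move=> hP hQ iP iQ vn0 ev.
have [_ BB] := two_proj iP iQ.
set A := P + Q - 1%:M in ev BB *; set B := P - Q in BB *.
have hA : Defs.hermitian A by rewrite /Defs.hermitian /A cadjD cadjN cadj1 cadjD hP hQ.
have hB : Defs.hermitian B by rewrite /Defs.hermitian /B cadjD cadjN hP hQ.
have vAA : v *m (A *m A) = a ^+ 2 *: v by rewrite mulmxA ev -scalemxAl ev scalerA expr2.
have ngt := nrm_gt0 vn0.
split.
  have := herm_sq v hA; rewrite vAA ev cadjZ -!scalemxAl -scalemxAr scalerA.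
  move/(congr1 (fun M : 'M[C]_1 => M 0 0)); rewrite [LHS]mxE [RHS]mxE => e.
  have e2 : a * a^* = a ^+ 2.
    have nz : (v *m cadj v) 0 0 != 0 by rewrite gt_eqF.
    by apply: (mulIf nz); rewrite e.
  rewrite CrealE; have [->|an0] := eqVneq a 0; first by rewrite conjC0.
  by apply/eqP; apply: (mulfI an0); rewrite e2 expr2.
have := herm_sq v hB; rewrite BB (mulmxBr v 1%:M) mulmx1 vAA.
have -> : v - a ^+ 2 *: v = (1 - a ^+ 2) *: v by rewrite scalerBl scale1r.
rewrite -scalemxAl.
move/(congr1 (fun M : 'M[C]_1 => M 0 0)); rewrite [RHS]mxE => e.
have : 0 <= ((v *m B) *m cadj (v *m B)) 0 0.
  have [->|wn0] := eqVneq (v *m B) 0; first by rewrite mul0mx mxE.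
  exact/ltW/nrm_gt0.
by rewrite e pmulr_lge0.
Qed.

End Herm.

Lemma flip (C : fieldType) n (P Q : 'M[C]_n) (v : 'rV[C]_n) a :
  P *m P = P -> Q *m Q = Q -> v != 0 -> v *m (P + Q - 1%:M) = a *: v -> a ^+ 2 != 1 ->
  (v *m (P - Q) != 0) /\ (v *m (P - Q)) *m (P + Q - 1%:M) = - a *: (v *m (P - Q)).
Proof.
move=> iP iQ vn0 ev a1.
have [AB BB] := two_proj iP iQ.
have BA : (P - Q) *m (P + Q - 1%:M) = - ((P + Q - 1%:M) *m (P - Q)) by rewrite AB opprK.
split; last by rewrite -mulmxA BA mulmxN mulmxA ev -scalemxAl scaleNr.
apply: contra vn0 => /eqP e.
have : v *m ((P - Q) *m (P - Q)) = (1 - a ^+ 2) *: v.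
  by rewrite BB mulmxBr mulmx1 mulmxA ev -scalemxAl ev scalerA -expr2 scalerBl scale1r.
rewrite mulmxA e mul0mx => /esym /eqP; rewrite scaler_eq0 subr_eq0 eq_sym (negPf a1) /=.
by [].
Qed.

Definition evf (C : fieldType) n (X : 'M[C]_n) (t : C) := eigenvalue X (t * n%:R^-1 - 1).

Lemma eq_h (C : fieldType) (n : nat) (x y : C) : n%:R != 0 :> C ->
  (x * n%:R^-1 - 1 == y * n%:R^-1 - 1) = (x == y).
Proof.
move=> hn; rewrite -subr_eq0 (_ : x * n%:R^-1 - 1 - (y * n%:R^-1 - 1) = (x - y) * n%:R^-1); last by ring.
by rewrite mulf_eq0 invr_eq0 (negPf hn) orbF subr_eq0.
Qed.

Lemma eq_h1 (C : fieldType) (n : nat) (x : C) : n%:R != 0 :> C ->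
  (x * n%:R^-1 - 1 == 1) = (x == 2 * n%:R).
Proof.
move=> hn; rewrite -subr_eq0 (_ : x * n%:R^-1 - 1 - 1 = (x - 2 * n%:R) * n%:R^-1); last by field.
by rewrite mulf_eq0 invr_eq0 (negPf hn) orbF subr_eq0.
Qed.

Lemma eq_hN1 (C : fieldType) (n : nat) (x : C) : n%:R != 0 :> C ->
  (x * n%:R^-1 - 1 == -1) = (x == 0).
Proof.
move=> hn; rewrite -subr_eq0 (_ : x * n%:R^-1 - 1 - -1 = x * n%:R^-1); last by ring.
by rewrite mulf_eq0 invr_eq0 (negPf hn) orbF.
Qed.

Lemma sigma_step (C : fieldType) n (P Q : 'M[C]_n) t : P *m P = P -> Q *m Q = Q ->
  n%:R != 0 :> C -> evf (P + Q - 1%:M) t -> t != 0 -> t != 2 * n%:R ->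
  evf (P + Q - 1%:M) (2 * n%:R - t).
Proof.
move=> iP iQ hn /eigenvalueP [v ev vn0] t0 t2.
set a := t * n%:R^-1 - 1 in ev.
have a1 : a ^+ 2 != 1.
  by rewrite sqrf_eq1 negb_or /a eq_h1 // eq_hN1 // t2 t0.
have [wn0 wev] := flip iP iQ vn0 ev a1.
apply/eigenvalueP; exists (v *m (P - Q)) => //.
rewrite wev; congr (_ *: _); rewrite /a; field; exact: hn.
Qed.

Lemma tau_step (C : fieldType) n (P1 P2 P3 P4 : 'M[C]_n) t :
  P1 *m P1 = P1 -> P2 *m P2 = P2 -> 
  P1 + P2 - 1%:M = - (P3 + P4 - 1%:M) - (n%:R^-1)%:M ->
  n%:R != 0 :> C -> evf (P3 + P4 - 1%:M) t -> t + 1 != 0 -> t + 1 != 2 * n%:R ->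
  evf (P3 + P4 - 1%:M) (2 * n%:R - 2 - t).
Proof.
move=> iP iQ hY hn /eigenvalueP [v ev vn0] t0 t2.
set X := P3 + P4 - 1%:M in hY ev *.
set a := t * n%:R^-1 - 1 in ev.
have evY : v *m (P1 + P2 - 1%:M) = (- a - n%:R^-1) *: v.
  by rewrite hY mulmxBr mulmxN ev mul_mx_scalar [in RHS]scalerBl [in RHS]scaleNr.
have a1 : (- a - n%:R^-1) ^+ 2 != 1.
  have eb : - a - n%:R^-1 = (2 * n%:R - (t + 1)) * n%:R^-1 - 1 by rewrite /a; field.
  rewrite eb sqrf_eq1 negb_or eq_h1 // eq_hN1 //; apply/andP; split.
    by rewrite -[X in _ == X](subr0 (2 * n%:R)) (inj_eq (addrI _)) (inj_eq oppr_inj).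
  by rewrite subr_eq0 eq_sym.
have [wn0 wev] := flip iP iQ vn0 evY a1.
apply/eigenvalueP; exists (v *m (P1 - P2)) => //.
have hX : X = - (P1 + P2 - 1%:M) - (n%:R^-1)%:M.
  by rewrite hY opprB opprK addrAC subrr add0r.
rewrite hX mulmxBr mulmxN wev mul_mx_scalar -scaleNr -scalerBl.
congr (_ *: _); rewrite /a; field; exact: hn.
Qed.

Lemma sq_bound (C : numDomainType) (x : C) : x \is Num.real -> 0 <= 1 - x ^+ 2 -> -1 <= x <= 1.
Proof.
move=> xr; rewrite subr_ge0 -real_normK // expr_le1 // => h.
by rewrite -real_ler_norml.
Qed.

Lemma bound_step (C : numClosedFieldType) n (P1 P2 P3 P4 : 'M[C]_n) t :
  Defs.hermitian P1 -> Defs.hermitian P2 -> Defs.hermitian P3 -> Defs.hermitian P4 ->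
  P1 *m P1 = P1 -> P2 *m P2 = P2 -> P3 *m P3 = P3 -> P4 *m P4 = P4 ->
  P1 + P2 - 1%:M = - (P3 + P4 - 1%:M) - (n%:R^-1)%:M ->
  n%:R != 0 :> C -> evf (P3 + P4 - 1%:M) t -> 0 <= t /\ t + 1 <= 2 * n%:R.
Proof.
move=> h1 h2 h3 h4 i1 i2 i3 i4 hY hn /eigenvalueP [v ev vn0].
set X := P3 + P4 - 1%:M in hY ev *.
set a := t * n%:R^-1 - 1 in ev.
have evY : v *m (P1 + P2 - 1%:M) = (- a - n%:R^-1) *: v.
  by rewrite hY mulmxBr mulmxN ev mul_mx_scalar [in RHS]scalerBl [in RHS]scaleNr.
have [ar a2] := eig_bound h3 h4 i3 i4 vn0 ev.
have [br b2] := eig_bound h1 h2 i1 i2 vn0 evY.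
have /andP[ha _] := sq_bound ar a2.
have /andP[hb _] := sq_bound br b2.
have n0 : 0 <= n%:R :> C by rewrite ler0n.
split.
  have : 0 <= a - (-1) by rewrite subr_ge0.
  rewrite (_ : a - -1 = t * n%:R^-1); last by rewrite /a; ring.
  move=> th; rewrite (_ : t = t * n%:R^-1 * n%:R); last by field.
  exact: mulr_ge0.
have : 0 <= (- a - n%:R^-1) - (-1) by rewrite subr_ge0.
rewrite (_ : - a - n%:R^-1 - -1 = 2 - (t + 1) * n%:R^-1); last by rewrite /a; ring.
rewrite subr_ge0 => th.
rewrite (_ : t + 1 = (t + 1) * n%:R^-1 * n%:R); last by field.
exact: ler_wpM2r.
Qed.

Definition good (C : numClosedFieldType) n (P1 P2 P3 P4 : 'M[C]_n) : Prop :=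
  [/\ [/\ Defs.hermitian P1, Defs.hermitian P2, Defs.hermitian P3 & Defs.hermitian P4],
      [/\ P1 *m P1 = P1, P2 *m P2 = P2, P3 *m P3 = P3 & P4 *m P4 = P4],
      P1 + P2 - 1%:M = - (P3 + P4 - 1%:M) - (n%:R^-1)%:M &
      n%:R != 0 :> C].

Section S.
Variables (C : numClosedFieldType) (n : nat) (P1 P2 P3 P4 : 'M[C]_n).
Hypothesis G : good P1 P2 P3 P4.
Let X := P3 + P4 - 1%:M.

Lemma g_bound t : evf X t -> 0 <= t /\ t + 1 <= 2 * n%:R.
Proof. case: G => [[a1 a2 a3 a4] [b1 b2 b3 b4] c d] e; exact: (bound_step a1 a2 a3 a4 b1 b2 b3 b4 c d e). Qed.

Lemma g_sigma t : evf X t -> t != 0 -> t != 2 * n%:R -> evf X (2 * n%:R - t).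
Proof. case: G => [[a1 a2 a3 a4] [b1 b2 b3 b4] c d] e; exact: (sigma_step b3 b4 d e). Qed.

Lemma g_tau t : evf X t -> t + 1 != 0 -> t + 1 != 2 * n%:R -> evf X (2 * n%:R - 2 - t).
Proof. case: G => [[a1 a2 a3 a4] [b1 b2 b3 b4] c d] e; exact: (tau_step b1 b2 c d e). Qed.

Lemma g_nat t : evf X t -> exists m : nat, t = m%:R.
Proof.
suff H : forall N : nat, forall t, evf X t -> t < N%:R -> exists m : nat, t = m%:R.
  move=> et; apply: (H (2 * n)%N) => //; have [_ b] := g_bound et.
  by rewrite natrM; apply: lt_le_trans b; rewrite ltrDl.
elim=> [|N IH] {}t et tN.
  have [t0 _] := g_bound et; by have := le_lt_trans t0 tN; rewrite ltxx.
have [t0 b] := g_bound et.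
have [->|nt0] := eqVneq t 0; first by exists 0%N.
have [->|nt1] := eqVneq t 1; first by exists 1%N.
have nt2 : t != 2 * n%:R.
  by apply: contraTneq b => ->; rewrite gerDl ler10.
have e1 := g_sigma et nt0 nt2.
have e2 : evf X (2 * n%:R - 2 - (2 * n%:R - t)).
  have := @g_tau _ e1. move=> H. apply: H.
    apply: contraTneq b => e.
    have -> : t = 2 * n%:R + 1.
      by transitivity (2 * n%:R + 1 - (2 * n%:R - t + 1)); [ring | rewrite e subr0].
    by rewrite -addrA gerDl lt_geF // addr_gt0 // ltr01.
  apply: contra nt1 => /eqP e; apply/eqP.
  by transitivity (1 - ((2 * n%:R - t + 1) - 2 * n%:R)); [ring | rewrite e subrr subr0].
rewrite (_ : 2 * n%:R - 2 - (2 * n%:R - t) = t - 2) in e2; last by ring.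
have [|m hm] := IH _ e2.
  by rewrite ltrBlDr; apply: (lt_le_trans tN); rewrite -natrD ler_nat addn2.
by exists m.+2; rewrite -addn2 natrD -hm subrK.
Qed.

Definition evn (m : nat) := evf X m%:R.

Lemma n_bound m : evn m -> (m < 2 * n)%N.
Proof.
move/g_bound=> [_ b]; rewrite -(ler_nat C) -addn1 natrD natrM; exact: b.
Qed.

Lemma n_sigma m : evn m -> m != 0%N -> evn (2 * n - m).
Proof.
move=> e m0; have mb := n_bound e.
have := g_sigma e; rewrite pnatr_eq0 m0 => /(_ isT).
rewrite (_ : 2 * n%:R = (2 * n)%N%:R :> C); last by rewrite natrM.
rewrite eqr_nat neq_ltn mb => /(_ isT).
by rewrite /evn natrB // ltnW.
Qed.

Lemma n_tau m : evn m -> m.+1 != (2 * n)%N -> evn (2 * n - 2 - m).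
Proof.
move=> e m1; have mb := n_bound e.
have := g_tau e; rewrite -(natrD _ m 1) pnatr_eq0 addn1 /= => /(_ isT).
rewrite (_ : 2 * n%:R = (2 * n)%N%:R :> C); last by rewrite natrM.
rewrite eqr_nat m1 => /(_ isT).
have h2 : (2 <= 2 * n)%N by lia.
have h3 : (m <= 2 * n - 2)%N by lia.
by rewrite /evn natrB // natrB // -[(2%N)%:R]/(2 : C).
Qed.

Lemma n_desc k b : evn (b + k.*2) -> evn b.
Proof.
elim: k => [|k IH]; first by rewrite double0 addn0.
move=> e; apply: IH; have mb := n_bound e.
have e1 := n_sigma e; rewrite doubleS addnS addnS /= in e1; have {}e1 := e1 isT.
rewrite doubleS !addnS in mb.
have e2 := n_tau e1.
have := e2 (ltac:(apply/eqP; lia)).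
rewrite (_ : (2 * n - 2 - (2 * n - (b + k.*2).+2) = b + k.*2)%N) //; lia.
Qed.

Lemma n_asc p : evn p -> (p < 2)%N -> forall j, (j < n)%N -> evn (j.*2 + p).
Proof.
move=> ep p2; elim=> [|j IH] jn; first by rewrite double0.
have e := IH (ltnW jn).
have e1 := n_tau e (ltac:(apply/eqP; lia)).
have e2 := n_sigma e1 (ltac:(apply/eqP; lia)).
rewrite (_ : (2 * n - (2 * n - 2 - (j.*2 + p)) = (j.+1).*2 + p)%N) in e2; [exact: e2 | lia].
Qed.

Lemma g_exists : (0 < n)%N -> exists2 p, (p < 2)%N & forall j, (j < n)%N -> evn (j.*2 + p).
Proof.
move=> n0; have hn : n%:R != 0 :> C by case: G.
have : size (char_poly X) != 1%N by rewrite size_char_poly; lia.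
move/closed_rootP => [a ra].
have ea : eigenvalue X a by rewrite eigenvalue_root_char.
have et : evf X ((a + 1) * n%:R).
  by rewrite /evf (_ : (a + 1) * n%:R * n%:R^-1 - 1 = a) //; field.
have [m hm] := g_nat et; rewrite hm in et.
have e2 : evn (odd m) by apply: (@n_desc m./2); rewrite odd_double_half.
exists (odd m); first by case: odd.
move=> j jn; have o2 : (odd m < 2)%N by case: odd.
exact: (n_asc e2 o2 jn).
Qed.

End S.

Lemma sum_all_one n (f : 'I_n -> nat) : (forall j, 0 < f j)%N -> (\sum_j f j <= n)%N -> forall j, f j = 1%N.
Proof.
move=> pos le.
have e : (\sum_j f j = \sum_j (f j - 1) + n)%N.
  rewrite -[in X in (_ + X)%N](card_ord n) -sum1_card -big_split /=.
  by apply: eq_bigr => j _; rewrite subnK.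
have : (\sum_j (f j - 1) == 0)%N by move: le; rewrite e; lia.
rewrite sum_nat_eq0 => /forallP H j; have := H j; have := pos j; move=> /= ? /eqP; lia.
Qed.

Lemma diag_exists (C : fieldType) n (X : 'M[C]_n) (d : 'I_n -> C) :
  injective d -> (forall j, eigenvalue X (d j)) ->
  exists V : 'M_n, V \in unitmx /\ V *m X = diag_mx (\row_j d j) *m V.
Proof.
move=> dinj ev.
pose E j := eigenspace X (d j).
have dir : mxdirect (\sum_(j | predT j) E j).
  by apply: mxdirect_sum_eigenspace => i j _ _; apply: dinj.
have rk : \rank (\sum_j E j) = (\sum_j \rank (E j))%N := mxdirectP dir.
have pos j : (0 < \rank (E j))%N by rewrite lt0n mxrank_eq0; exact: ev.
have le : (\sum_j \rank (E j) <= n)%N by rewrite -rk rank_leq_col.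
have one := sum_all_one pos le.
have full : \rank (\sum_j E j) = n.
  by rewrite rk (eq_bigr (fun _ => 1%N)) ?sum1_card ?card_ord // => j _; rewrite one.
have hv j : exists v : 'rV_n, (v <= E j)%MS && (v != 0).
  have /eigenvalueP [v hv vn0] := ev j.
  by exists v; rewrite vn0 andbT; apply/eigenspaceP.
pose v j := sval (sigW (hv j)).
have vP j : (v j <= E j)%MS && (v j != 0) := svalP (sigW (hv j)).
pose V := \matrix_j v j.
have EV j : (E j <= V)%MS.
  have /andP [vs vn0] := vP j.
  have rv : \rank (v j) = 1%N.
    apply/eqP; rewrite eqn_leq rank_leq_row lt0n mxrank_eq0 vn0 //.
  have := (mxrank_leqif_sup vs).2; rewrite rv one eqxx => /esym Ev.
  apply: submx_trans Ev _; rewrite -(rowK v j); exact: row_sub.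
have SV : (\sum_j E j <= V)%MS by apply/sumsmx_subP => j _; exact: EV.
exists V; split.
  rewrite -row_full_unit /row_full eqn_leq rank_leq_col -{1}full.
  exact: mxrankS.
apply/row_matrixP => j; rewrite !row_mul rowK row_diag_mx -scalemxAl -rowE rowK mxE.
by have /andP [/eigenspaceP -> _] := vP j.
Qed.

Section Conj.
Variables (C : fieldType) (n : nat) (V : 'M[C]_n).
Hypothesis Vu : V \in unitmx.
Definition cj (M : 'M[C]_n) := V *m M *m invmx V.

Lemma cjD A B : cj (A + B) = cj A + cj B.
Proof. by rewrite /cj mulmxDr mulmxDl. Qed.
Lemma cjN A : cj (- A) = - cj A.
Proof. by rewrite /cj mulmxN mulNmx. Qed.
Lemma cjB A B : cj (A - B) = cj A - cj B.
Proof. by rewrite cjD cjN. Qed.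
Lemma cjZ a A : cj (a *: A) = a *: cj A.
Proof. by rewrite /cj -scalemxAr -scalemxAl. Qed.
Lemma cj1 : cj 1%:M = 1%:M.
Proof. by rewrite /cj mulmx1 mulmxV. Qed.
Lemma cjs a : cj a%:M = a%:M.
Proof. by rewrite -scalemx1 cjZ cj1. Qed.
Lemma cjM A B : cj (A *m B) = cj A *m cj B.
Proof. by rewrite /cj !mulmxA mulmxKV. Qed.
Lemma cj_tr A : \tr (cj A) = \tr A.
Proof. by rewrite /cj mxtrace_mulC !mulmxA mulVmx // mul1mx. Qed.

Lemma cj_rel A M (d : 'rV_n) s : cj A = diag_mx d -> M *m A = s *: (A *m M) ->
  forall i j, cj M i j * d 0 j = s * (d 0 i * cj M i j).
Proof.
move=> hA hM i j.
have := congr1 cj hM; rewrite cjM cjZ cjM hA mul_mx_diag mul_diag_mx.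
by move/matrixP => /(_ i j); rewrite !mxE.
Qed.

Lemma col_eig M (e : C) j : (forall i, cj M i j = if i == j then e else 0) ->
  M *m col j (invmx V) = e *: col j (invmx V).
Proof.
move=> h.
have e1 : M *m invmx V = invmx V *m cj M by rewrite /cj !mulmxA mulVmx // mul1mx.
have e2 : col j (cj M) = e *: col j 1%:M.
  by apply/colP => i; rewrite [LHS]mxE h !mxE; case: eqP => _; rewrite ?mulr1 ?mulr0.
by rewrite !colE mulmxA e1 -mulmxA -(colE j (cj M)) e2 colE mul1mx -scalemxAr.
Qed.

End Conj.

Lemma tr_diag_mul (C : comPzRingType) n (A B : 'M[C]_n) :
  (forall i j, i != j -> B i j = 0) -> \tr (A *m B) = \sum_j A j j * B j j.
Proof.
move=> hB; rewrite /mxtrace; apply: eq_bigr => i _; rewrite mxE (bigD1 i) //= big1 ?addr0 //.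
by move=> k ki; rewrite hB ?mulr0.
Qed.

Lemma idem_tr (C : fieldType) n (P : 'M[C]_n) : P *m P = P -> \tr P = (\rank P)%:R.
Proof.
move=> hP.
set CB := col_base P; set RB := row_base P.
have hb : CB *m RB = P by exact: mulmx_base.
have h1 : (CB *m (RB *m CB)) *m RB = (CB *m 1%:M) *m RB.
  by rewrite mulmx1 (mulmxA CB RB CB) hb -(mulmxA P CB RB) hb hP.
have e : RB *m CB = 1%:M.
  exact: (row_full_inj (col_base_full P) (row_free_inj (row_base_free P) h1)).
by rewrite -{1}hb mxtrace_mulC e mxtrace1.
Qed.

Lemma sum_widen (C : zmodType) n r (F : nat -> C) : (r <= n)%N ->
  \sum_(j < n) (if (j < r)%N then F j else 0) = \sum_(j < r) F j.
Proof.
move=> rn; rewrite -big_mkcond /=.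
by rewrite (big_ord_widen n F rn).
Qed.

Lemma tr_compute (C : comPzRingType) n (Pp Qp : 'M[C]_n) r (F : nat -> C) : (r <= n)%N ->
  (forall i j, i != j -> Qp i j = 0) -> (forall j : 'I_n, Qp j j = if (j < r)%N then 1 else 0) ->
  (forall j : 'I_n, (j < r)%N -> Pp j j = F j) -> \tr (Pp *m Qp) = \sum_(j < r) F j.
Proof.
move=> rn hoff hd hP; rewrite tr_diag_mul // -(sum_widen F rn); apply: eq_bigr => j _.
by rewrite hd; case: ifP => jr; [rewrite hP ?mulr1 | rewrite mulr0].
Qed.

Lemma diag_of_comm (C : fieldType) n (Sp : 'M[C]_n) (d : 'rV[C]_n) :
  injective (d 0) -> (forall i j, Sp i j * d 0 j = 1 * (d 0 i * Sp i j)) ->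
  forall i j, i != j -> Sp i j = 0.
Proof.
move=> dinj h i j ij.
have : (d 0 j - d 0 i) * Sp i j == 0 by rewrite mulrBl mulrC (h i j) mul1r subrr.
rewrite mulf_eq0 subr_eq0 => /orP [/eqP e|/eqP //].
by move: ij; rewrite (dinj _ _ e) eqxx.
Qed.

Lemma sq_diag (C : comPzRingType) n (Sp : 'M[C]_n) : (forall i j, i != j -> Sp i j = 0) ->
  Sp *m Sp = 1%:M -> forall j, Sp j j ^+ 2 = 1.
Proof.
move=> hoff hS j; have := congr1 (fun M : 'M_n => M j j) hS; rewrite /= !mxE eqxx /=.
rewrite (bigD1 j) //= big1 ?addr0 ?expr2 // => k kj; rewrite (hoff k j) ?mulr0 //.
Qed.

Lemma anti_diag (C : numFieldType) (k d : C) : k * d = -1 * (d * k) -> d != 0 -> k = 0.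
Proof.
move=> h d0; have : (2 * d) * k = 0.
  by rewrite -[RHS](subrr (k * d)) {2}h; ring.
move/eqP; rewrite !mulf_eq0 (negPf d0) pnatr_eq0 /=. by move/eqP.
Qed.

Lemma sign_det (C : numFieldType) (s z : C) : s ^+ 2 = 1 -> 0 < s * z ->
  (0 < z -> s = 1) /\ (z < 0 -> s = -1).
Proof.
move=> /eqP; rewrite sqrf_eq1 => /orP [] /eqP -> h; split=> // hz.
- by move: h; rewrite mul1r => /lt_trans /(_ hz); rewrite ltxx.
- by move: h; rewrite mulN1r oppr_gt0 => /lt_trans /(_ hz); rewrite ltxx.
Qed.

Lemma cadjK (C : numClosedFieldType) m n (A : 'M[C]_(m, n)) : cadj (cadj A) = A.
Proof. by apply/matrixP => i k; rewrite !mxE conjCK. Qed.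

Lemma pos_entry (C : numClosedFieldType) n (V M : 'M[C]_n) (e : 'I_n -> C) :
  V \in unitmx -> (forall v : 'cV[C]_n, v != 0 -> 0 < (cadj v *m M *m v) 0 0) ->
  (forall i j, cj V M i j = if i == j then e j else 0) -> forall j, 0 < e j.
Proof.
move=> Vu hpd hM j.
set w := col j (invmx V).
have wn0 : w != 0.
  apply/eqP => w0.
  have : V *m w = col j 1%:M by rewrite /w !colE mulmxA mulmxV // mul1mx.
  rewrite w0 mulmx0 => /esym /matrixP /(_ j 0); rewrite !mxE eqxx /= => /eqP.
  by rewrite oner_eq0.
have Mw : M *m w = e j *: w := col_eig Vu (hM ^~ j).
have := hpd w wn0; rewrite -mulmxA Mw -scalemxAr mxE.
have hw : cadj w != 0 by apply: contra wn0 => /eqP h; rewrite -(cadjK w) h; apply/eqP/matrixP => a b; rewrite !mxE conjC0.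
have := nrm_gt0 hw; rewrite cadjK => pos.
by rewrite pmulr_lgt0.
Qed.

Lemma sum_lin (C : comPzRingType) r p (a b : C) :
  \sum_(j < r) (a * (j.*2 + p)%N%:R + b) = a * (\sum_(j < r) (j.*2 + p))%N%:R + r%:R * b.
Proof. by rewrite big_split /= -mulr_sumr natr_sum sumr_const card_ord mulr_natl. Qed.

Lemma tri r p : ((\sum_(j < r) (j.*2 + p)) + r = r * (r + p))%N.
Proof.
rewrite -(big_mkord xpredT (fun j => (j.*2 + p)%N)).
elim: r => [|r IH]; first by rewrite big_geq.
rewrite big_nat_recr //=; nia.
Qed.

Lemma mul_diag_entry (C : pzSemiRingType) n (Sp : 'M[C]_n) (z : 'I_n -> C) :
  (forall i j, i != j -> Sp i j = 0) ->
  forall i j, (Sp *m diag_mx (\row_k z k)) i j = if i == j then Sp j j * z j else 0.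
Proof.
move=> hoff i j; rewrite mul_mx_diag !mxE.
by case: eqVneq => [->|ij] //; rewrite hoff ?mul0r.
Qed.

Theorem mainTheorem12 (C : numClosedFieldType) (n r : nat)
    (P1 P2 P3 P4 : 'M[C]_n)
    (hP1 : real_orth_proj P1) (hP2 : real_orth_proj P2)
    (hP3 : real_orth_proj P3) (hP4 : real_orth_proj P4)
    (hsum : P1 + P2 + P3 + P4 = (2 - n%:R^-1)%:M)
    (hrk1 : (\rank P1)%:Z = (n./2)%:Z - (-1) ^+ n)
    (hrk2 : (\rank P2)%:Z = (n./2)%:Z)
    (hrk3 : (\rank P3)%:Z = (n./2)%:Z)
    (hrk4 : (\rank P4)%:Z = (n./2)%:Z)
    (hirr : forall U : 'M[C]_n,
        (U *m P1^T <= U)%MS -> (U *m P2^T <= U)%MS ->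
        (U *m P3^T <= U)%MS -> (U *m P4^T <= U)%MS ->
        U = 0 \/ row_full U)
    (hr : (2 * r < n)%N)
    (S : 'M[C]_n)
    (hS : is_sgn ((2 * r%:R - 2^-1)%:M - n%:R *: (P3 + P4)) S) :
  let Q := 2^-1 *: (1%:M + S) in
  [/\ ntr Q = r%:R / n%:R,
      ntr (P3 *m Q) = r%:R * (2 * r%:R - 1 + (-1) ^+ n) / (4 * n%:R ^+ 2),
      ntr (P4 *m Q) = r%:R * (2 * r%:R - 1 + (-1) ^+ n) / (4 * n%:R ^+ 2),
      ntr (P1 *m Q) = r%:R * (4 * n%:R - 2 * r%:R - 1 - (-1) ^+ n) / (4 * n%:R ^+ 2)
    & ntr (P2 *m Q) = r%:R * (4 * n%:R - 2 * r%:R - 1 - (-1) ^+ n) / (4 * n%:R ^+ 2)].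
Proof.
move=> Q.
have n0 : (0 < n)%N by lia.
have hn : n%:R != 0 :> C by rewrite pnatr_eq0 -lt0n.
have [h1 i1] := herm_proj hP1.
have [h2 i2] := herm_proj hP2.
have [h3 i3] := herm_proj hP3.
have [h4 i4] := herm_proj hP4.
have hY : P1 + P2 - 1%:M = - (P3 + P4 - 1%:M) - (n%:R^-1)%:M.
  apply/matrixP => i j; move/matrixP: hsum => /(_ i j); rewrite !mxE => e.
  have E : P1 i j = (2 - n%:R^-1) *+ (i == j) - P2 i j - P3 i j - P4 i j by rewrite -e; ring.
  by rewrite E; case: (i == j); rewrite /= ?mulr1n ?mulr0n; ring.
have G : good P1 P2 P3 P4 by split.
have [p p2 evp] := g_exists G n0.
pose h : C := n%:R^-1.
pose lam (j : 'I_n) : C := (j.*2 + p)%N%:R * h - 1.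
have laminj : injective lam.
  move=> i j /eqP; rewrite /lam eq_h // eqr_nat => /eqP e; apply: val_inj => /=; lia.
have evl j : eigenvalue (P3 + P4 - 1%:M) (lam j) := evp j (ltn_ord j).
have [V [Vu VX]] := diag_exists laminj evl.
pose d := \row_j lam j.
have cjX : cj V (P3 + P4 - 1%:M) = diag_mx d by rewrite /cj VX -mulmxA mulmxV // mulmx1.
have dinj : injective (d 0) by move=> i j; rewrite !mxE; exact: laminj.
case: hS => hSh hSu hSc [_ hpd].
have SS : S *m S = 1%:M by move: hSu; rewrite (hSh : cadj S = S).
have SA : S *m (P3 + P4) = (P3 + P4) *m S.
  move: hSc; rewrite mulmxBr mulmxBl mul_mx_scalar mul_scalar_mx -scalemxAr -scalemxAl.
  by move/eqP; rewrite (inj_eq (addrI _)) (inj_eq oppr_inj) => /eqP /(scalerI hn).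
have SX : S *m (P3 + P4 - 1%:M) = 1 *: ((P3 + P4 - 1%:M) *m S).
  by rewrite scale1r mulmxBr mulmxBl SA mulmx1 mul1mx.
have Soff := diag_of_comm dinj (cj_rel Vu cjX SX).
have Sp2 : cj V S *m cj V S = 1%:M by rewrite -cjM // SS cj1.
have s2 := sq_diag Soff Sp2.
pose zz (j : 'I_n) : C := 2 * r%:R - 2^-1 - (j.*2 + p)%N%:R.
have cjZ' : cj V ((2 * r%:R - 2^-1)%:M - n%:R *: (P3 + P4)) = diag_mx (\row_j zz j).
  have -> : P3 + P4 = (P3 + P4 - 1%:M) + 1%:M by rewrite subrK.
  rewrite cjB // cjs // cjZ // cjD // cjX cj1 //.
  apply/matrixP => i j; rewrite !mxE; case: eqVneq => [->|ij] /=.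
    by rewrite !mulr1n /zz /lam /h; field.
  by rewrite !mulr0n addr0 mulr0 subr0.
have SZ i j : cj V (S *m ((2 * r%:R - 2^-1)%:M - n%:R *: (P3 + P4))) i j
    = if i == j then cj V S j j * zz j else 0.
  by rewrite cjM // cjZ' (mul_diag_entry _ Soff).
have zpos := pos_entry Vu hpd SZ.
have sj j : cj V S j j = if (j < r)%N then 1 else -1.
  have [A B] := sign_det (s2 j) (zpos j).
  case: ifP => jr; [apply: A | apply: B]; rewrite /zz.
    have ek : 2 * r%:R - (j.*2 + p)%N%:R = (r.*2 - (j.*2 + p))%N%:R :> C.
      by rewrite natrB; [rewrite -[r.*2]mul2n natrM | lia].
    rewrite (_ : 2 * r%:R - 2^-1 - (j.*2 + p)%N%:R = (2 * r%:R - (j.*2 + p)%N%:R) - 2^-1); last by ring.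
    rewrite ek subr_gt0; apply: (@lt_le_trans _ _ 1).
      by rewrite invf_lt1 ?ltr0n // ltr1n.
    by rewrite ler1n; lia.
  have ek : (j.*2 + p)%N%:R - 2 * r%:R = (j.*2 + p - r.*2)%N%:R :> C.
    by rewrite natrB; [rewrite -[r.*2]mul2n natrM | lia].
  rewrite (_ : 2 * r%:R - 2^-1 - (j.*2 + p)%N%:R = - (((j.*2 + p)%N%:R - 2 * r%:R) + 2^-1)); last by ring.
  by rewrite ek oppr_lt0 ltr_wpDl // invr_gt0 ltr0n.
have KX : (P3 - P4) *m (P3 + P4 - 1%:M) = -1 *: ((P3 + P4 - 1%:M) *m (P3 - P4)).
  by have [AB _] := two_proj i3 i4; rewrite scaleN1r AB opprK.
have Kj j := cj_rel Vu cjX KX j j.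
pose A' := P3 + P4 - 1%:M + h%:M.
have cjA : cj V A' = diag_mx (\row_j (lam j + h)).
  rewrite /A' cjD // cjX cjs //; apply/matrixP => i j; rewrite !mxE.
  by case: eqVneq => [->|ij] /=; rewrite ?mulr1n ?mulr0n ?addr0.
have LX : (P1 - P2) *m A' = -1 *: (A' *m (P1 - P2)).
  have [AB _] := two_proj i1 i2.
  have e : P1 + P2 - 1%:M = - A' by rewrite hY /A' [RHS]opprD.
  by move: AB; rewrite e mulNmx mulmxN opprK scaleN1r => <-.
have Lj j := cj_rel Vu cjA LX j j.
have eP3 : P3 = 2^-1 *: (1%:M + (P3 + P4 - 1%:M) + (P3 - P4)).
  by apply/matrixP => i j; rewrite !mxE; case: (i == j); rewrite /= ?mulr1n ?mulr0n; field.
have eP4 : P4 = 2^-1 *: (1%:M + (P3 + P4 - 1%:M) - (P3 - P4)).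
  by apply/matrixP => i j; rewrite !mxE; case: (i == j); rewrite /= ?mulr1n ?mulr0n; field.
have eP1 : P1 = 2^-1 *: (1%:M + (- (P3 + P4 - 1%:M) - h%:M) + (P1 - P2)).
  by rewrite -hY; apply/matrixP => i j; rewrite !mxE; case: (i == j); rewrite /= ?mulr1n ?mulr0n; field.
have eP2 : P2 = 2^-1 *: (1%:M + (- (P3 + P4 - 1%:M) - h%:M) - (P1 - P2)).
  by rewrite -hY; apply/matrixP => i j; rewrite !mxE; case: (i == j); rewrite /= ?mulr1n ?mulr0n; field.
have c3 : cj V P3 = 2^-1 *: (1%:M + diag_mx d + cj V (P3 - P4)).
  by rewrite [in LHS]eP3 cjZ // cjD // cjD // cj1 // cjX.
have c4 : cj V P4 = 2^-1 *: (1%:M + diag_mx d - cj V (P3 - P4)).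
  by rewrite [in LHS]eP4 cjZ // cjB // cjD // cj1 // cjX.
have c1 : cj V P1 = 2^-1 *: (1%:M + (- diag_mx d - h%:M) + cj V (P1 - P2)).
  by rewrite [in LHS]eP1 cjZ // cjD // cjD // cj1 // cjB // cjN // cjX cjs.
have c2 : cj V P2 = 2^-1 *: (1%:M + (- diag_mx d - h%:M) - cj V (P1 - P2)).
  by rewrite [in LHS]eP2 cjZ // cjB // cjD // cj1 // cjB // cjN // cjX cjs.
have cQ : cj V Q = 2^-1 *: (1%:M + cj V S) by rewrite /Q cjZ // cjD // cj1.
have trX : \tr (P3 + P4 - 1%:M) = \tr (diag_mx d) by rewrite -cjX cj_tr.
rewrite /ntr -[\tr Q](cj_tr Vu) -[\tr (P3 *m Q)](cj_tr Vu) -[\tr (P4 *m Q)](cj_tr Vu).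
rewrite -[\tr (P1 *m Q)](cj_tr Vu) -[\tr (P2 *m Q)](cj_tr Vu) !cjM // c1 c2 c3 c4 cQ.
have rn : (r <= n)%N by lia.
have lam0 (j : 'I_n) : (j < r)%N -> lam j != 0.
  move=> jr; rewrite /lam /h subr_eq0; apply/eqP => e.
  have : (j.*2 + p)%N%:R = n%:R :> C by rewrite -[LHS](mulfVK hn) e mul1r.
  by move/eqP; rewrite eqr_nat; lia.
have lamh0 (j : 'I_n) : (j < r)%N -> lam j + h != 0.
  move=> jr; have -> : lam j + h = (1 + (j.*2 + p))%N%:R * n%:R^-1 - 1.
    by rewrite /lam /h natrD; ring.
  rewrite subr_eq0; apply/eqP => e.
  have : (1 + (j.*2 + p))%N%:R = n%:R :> C by rewrite -[LHS](mulfVK hn) e mul1r.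
  by move/eqP; rewrite eqr_nat; lia.
have [e3 e4] : \rank P3 = n./2 /\ \rank P4 = n./2 by case: hrk3; case: hrk4.
have Tn := tri n p.
have Tr := tri r p.
have hp : (p + n = n./2 + n./2 + 1)%N.
  move: trX; rewrite mxtrace_diag raddfB /= mxtraceD mxtrace1.
  rewrite (idem_tr i3) (idem_tr i4) e3 e4.
  rewrite (eq_bigr (fun j : 'I_n => h * (j.*2 + p)%N%:R + (-1))); last first.
    by move=> j _; rewrite mxE /lam mulrC.
  rewrite sum_lin.
  have -> : (\sum_(j < n) (j.*2 + p))%N%:R = n%:R * (n%:R + p%:R) - n%:R :> C.
    by have := congr1 (fun x : nat => x%:R : C) Tn; rewrite /= natrD natrM natrD => <-; rewrite addrK.
  move=> e; apply/eqP; rewrite -(eqr_nat C) natrD natrD natrD; apply/eqP.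
  move: e; rewrite /h => e.
  have e' : (n./2)%:R + (n./2)%:R = n%:R + p%:R - 1 :> C.
    by rewrite -[LHS](subrK n%:R) e; field.
  by rewrite e'; ring.
have hodd := odd_double_half n.
have hT : (\sum_(j < r) (j.*2 + p))%N%:R = r%:R * (r%:R + p%:R) - r%:R :> C.
  by have := congr1 (fun x : nat => x%:R : C) Tr; rewrite /= natrD natrM natrD => <-; rewrite addrK.
move: (cj V S) (cj V (P3 - P4)) (cj V (P1 - P2)) Soff sj Kj Lj => Sp Kp Lp Soff sj Kj Lj.
have Qoff i j : i != j -> (2^-1 *: (1%:M + Sp)) i j = 0.
  by move=> ij; rewrite !mxE (negPf ij) mulr0n add0r Soff // mulr0.
have Qd (j : 'I_n) : (2^-1 *: (1%:M + Sp)) j j = if (j < r)%N then 1 else 0.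
  by rewrite !mxE eqxx sj; case: ifP => _ /=; rewrite ?mulr1n; field.
have F3 (j : 'I_n) : (j < r)%N -> (2^-1 *: (1%:M + diag_mx d + Kp)) j j
    = 2^-1 * h * (j.*2 + p)%N%:R + 0.
  move=> jr; have K0 : Kp j j = 0 by apply: anti_diag (Kj j) _; rewrite mxE lam0.
  by rewrite !mxE eqxx !mulr1n K0 /lam; field.
have F4 (j : 'I_n) : (j < r)%N -> (2^-1 *: (1%:M + diag_mx d - Kp)) j j
    = 2^-1 * h * (j.*2 + p)%N%:R + 0.
  move=> jr; have K0 : Kp j j = 0 by apply: anti_diag (Kj j) _; rewrite mxE lam0.
  by rewrite !mxE eqxx !mulr1n K0 /lam; field.
have F1 (j : 'I_n) : (j < r)%N -> (2^-1 *: (1%:M + (- diag_mx d - h%:M) + Lp)) j j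
    = - (2^-1 * h) * (j.*2 + p)%N%:R + 2^-1 * (2 - h).
  move=> jr; have L0 : Lp j j = 0 by apply: anti_diag (Lj j) _; rewrite mxE lamh0.
  by rewrite !mxE eqxx !mulr1n L0 /lam; field.
have F2 (j : 'I_n) : (j < r)%N -> (2^-1 *: (1%:M + (- diag_mx d - h%:M) - Lp)) j j
    = - (2^-1 * h) * (j.*2 + p)%N%:R + 2^-1 * (2 - h).
  move=> jr; have L0 : Lp j j = 0 by apply: anti_diag (Lj j) _; rewrite mxE lamh0.
  by rewrite !mxE eqxx !mulr1n L0 /lam; field.
pose G3 := fun k : nat => 2^-1 * h * (k.*2 + p)%N%:R + 0.
pose G1 := fun k : nat => - (2^-1 * h) * (k.*2 + p)%N%:R + 2^-1 * (2 - h).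
rewrite (tr_compute (F := G3) rn Qoff Qd F3) (tr_compute (F := G3) rn Qoff Qd F4).
rewrite (tr_compute (F := G1) rn Qoff Qd F1) (tr_compute (F := G1) rn Qoff Qd F2) /G1 /G3 !sum_lin hT.
have trQ : \tr (2^-1 *: (1%:M + Sp)) = r%:R.
  rewrite /mxtrace (eq_bigr (fun j : 'I_n => if (j < r)%N then 1 else 0)); last by move=> j _; exact: Qd.
  by rewrite (sum_widen (fun _ => 1) rn) sumr_const card_ord.
rewrite trQ -signr_odd /h.
move: hp hodd; case: (odd n) => /= hp hodd.
  have -> : p = 0%N by lia.
  by split; field.
have -> : p = 1%N by lia.
by split; field.
Qed.
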